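(* There is an absolute constant $C>0$ such that the following holds. Let $n\ge 2$, $L>0$, and let $f:[0,1]^n\to\mathbb{R}$ satisfy $|f(x)-f(y)|\le L\|x-y\|$ for all $x,y\in[0,1]^n$. Run the algorithm described in the context on $f$ for $T\ge 1$ queries, with values $f_t=f(P(x_t))$. Then the average regret satisfies $$r_T:=\frac1T\sum_{t=1}^T f_t-\min_{x\in[0,1]^n}f(x)\le C\,L\sqrt{n}\,T^{-1/n}.$$
   Context: Notation: $\|\cdot\|$ is the Euclidean norm; $\Omega=[0,1]^n$; $\theta=2^{1/n}$; $P:\mathbb{R}^n\to\Omega$ is the Euclidean projection onto $\Omega$ (coordinatewise clipping to $[0,1]$); $e_i$ is the $i$-th standard basis vector and $v(i)$ the $i$-th coordinate of $v$. The algorithm maintains a list of candidates, each a triple (center $x$, edge vector $v$, score $s$). Splitting rule: given an evaluated point $x_a$ with edge vector $v_a$ and value $f_a$, let $I$ be an index maximizing $v_a(i)$ over $i\in\{1,\dots,n\}$ (ties broken by smallest index), let $z=\tfrac{v_a(I)}{2}e_I$, and add to the list the two candidates $(x_a+z,\ v_a-z,\ f_a-L\|v_a\|)$ and $(x_a-z,\ v_a-z,\ f_a-L\|v_a\|)$. Initialization: $x_1=v_1=(\theta^{-1},\theta^{-2},\dots,\theta^{-n})$, $f_1=f(P(x_1))$, and apply the splitting rule to $(x_1,v_1,f_1)$. For each $t\ge 2$: remove from the list a candidate with the smallest score (ties arbitrary), call its center $x_t$ and edge vector $v_t$, evaluate $f_t=f(P(x_t))$, and apply the splitting rule to $(x_t,v_t,f_t)$.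 *)

(* Defs.v *)
From Stdlib Require Import Reals.
From mathcomp Require Import all_boot all_order all_algebra.
From mathcomp Require Import Rstruct.
Set Implicit Arguments. Unset Strict Implicit. Unset Printing Implicit Defensive.
Import Order.TTheory GRing.Theory Num.Theory.
Local Open Scope ring_scope.

Definition vec (n : nat) := 'I_n -> R.

Definition enorm n (x : vec n) : R := Num.sqrt (\sum_(i < n) x i ^+ 2).

Definition in_cube n (x : vec n) : Prop := forall i, 0 <= x i <= 1.

(* Euclidean projection onto [0,1]^n : coordinatewise clipping *)
Definition proj n (x : vec n) : vec n := fun i => Num.max 0 (Num.min 1 (x i)).

Definition rpow (a b : R) : R := Rpower a b.

Definition theta (n : nat) : R := rpow 2 (n%:R)^-1.

(* initial point x_1 = v_1 = (theta^-1, ..., theta^-n) ; index i : 'I_n is coordinate i+1 *)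
Definition v_init n : vec n := fun i => theta n ^- (i.+1).

(* a candidate: ((center, edge vector), score) *)
Definition cand n := ((vec n * vec n) * R)%type.

Definition split_index n (v : vec n) (I : 'I_n) : Prop :=
  (forall j, v j <= v I) /\ (forall j : 'I_n, (j < I)%N -> v j < v I).

Definition zvec n (v : vec n) (I : 'I_n) : vec n :=
  fun i => if i == I then v I / 2 else 0.

Definition children n (L : R) (x v : vec n) (fa : R) (I : 'I_n) : seq (cand n) :=
  [:: ((fun i => x i + zvec v I i, fun i => v i - zvec v I i), fa - L * enorm v);
      ((fun i => x i - zvec v I i, fun i => v i - zvec v I i), fa - L * enorm v)].

(* A (possibly nondeterministic, ties arbitrary) run of the algorithm for T queries:
   xs t, vs t are the center and edge vector of the t-th query (t = 1..T), and
   Ls t is the candidate list after step t (after splitting). *)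
Definition is_run n (L : R) (f : vec n -> R) (T : nat)
    (xs vs : nat -> vec n) (Ls : nat -> seq (cand n)) : Prop :=
  xs 1%N = @v_init n /\ vs 1%N = @v_init n /\
  (exists I, split_index (vs 1%N) I /\
     Ls 1%N = children L (xs 1%N) (vs 1%N) (f (proj (xs 1%N))) I) /\
  (forall t : nat, (2 <= t <= T)%N ->
     exists (l1 l2 : seq (cand n)) (s : R) (I : 'I_n),
       Ls t.-1 = l1 ++ ((xs t, vs t), s) :: l2 /\
       all (fun c : cand n => s <= c.2) (l1 ++ l2) /\
       split_index (vs t) I /\
       Ls t = l1 ++ l2 ++ children L (xs t) (vs t) (f (proj (xs t))) I).

(* Main.v *)
Require Import Defs.
From Stdlib Require Import Reals FunctionalExtensionality.
From Stdlib Require List.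
From mathcomp Require Import all_boot all_order all_algebra.
From mathcomp Require Import Rstruct.
From mathcomp Require Import ring lra.
Import Order.TTheory GRing.Theory Num.Theory.
Local Open Scope ring_scope.
Set Implicit Arguments. Unset Strict Implicit.

Lemma rpow_gt0 x y : 0 < rpow x y.
Proof. by apply/RltP; rewrite /rpow /Rpower; apply: exp_pos. Qed.

Lemma rpowX x y n : 0 < x -> rpow x y ^+ n = rpow x (Rmult y (INR n)).
Proof.
move=> x0; rewrite -RpowE -Rpower_pow; last by apply/RltP; exact: rpow_gt0.
by rewrite /rpow Rpower_mult.
Qed.

Lemma natVK n : (0 < n)%N -> (n%:R : R)^-1 * n%:R = 1.
Proof. by move=> n0; apply: mulVf; rewrite pnatr_eq0 -lt0n. Qed.

Lemma theta_pow n : (0 < n)%N -> theta n ^+ n = 2.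
Proof.
move=> n0; rewrite /theta rpowX //.
rewrite [X in rpow _ X](_ : _ = 1); last by rewrite INRE; exact: natVK.
rewrite /rpow Rpower_1 //; try exact: Rlt_0_2. have := Rlt_0_2; move/RltP. done.
Qed.

Lemma omega_pow n T : (0 < n)%N -> (0 < T)%N ->
  rpow (T%:R) (- (n%:R)^-1) ^+ n * T%:R = 1.
Proof.
move=> n0 T0; rewrite rpowX ?ltr0n //.
rewrite [X in rpow _ X](_ : _ = Ropp 1); last first.
  have h: - (n%:R : R)^-1 * n%:R = -1 by rewrite mulNr natVK.
  by rewrite INRE; exact: h.
rewrite /rpow Rpower_Ropp Rpower_1 ?RinvE; last by apply/RltP; rewrite ltr0n.
by apply: mulVf; rewrite pnatr_eq0 -lt0n.
Qed.

Lemma clip_lip (a b : R) :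
  `|Num.max 0 (Num.min 1 a) - Num.max 0 (Num.min 1 b)| <= `|a - b|.
Proof.
rewrite !minEle !maxEle.
have := ler_norml (a - b) `|a - b|; rewrite lexx => /esym/andP[h1 h2].
case: (leP 1 a) => ?; case: (leP 1 b) => ?; rewrite ?ler01;
case: (leP 0 a) => ?; case: (leP 0 b) => ?;
rewrite ?subrr ?normr0 ?normr_ge0 //; rewrite ?ler_norml; try (apply/andP; split); lra.
Qed.

Lemma enorm_mono n (a b : vec n) :
  (forall i, `|a i| <= `|b i|) -> enorm a <= enorm b.
Proof.
move=> h; rewrite /enorm ler_sqrt; last by apply: sumr_ge0 => i _; exact: sqr_ge0.
apply: ler_sum => i _; rewrite -(real_normK (num_real (a i))) -(real_normK (num_real (b i))).
by apply: lerXn2r; rewrite ?nnegrE ?normr_ge0.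
Qed.

Lemma enorm_ge0 n (a : vec n) : 0 <= enorm a.
Proof. exact: sqrtr_ge0. Qed.

Lemma proj_cube n (x : vec n) : in_cube (proj x).
Proof.
move=> i; rewrite /proj; apply/andP; split; first by rewrite le_max lexx.
by rewrite ge_max ler01 ge_min lexx.
Qed.

Lemma proj_id n (y : vec n) : in_cube y -> forall i, proj y i = y i.
Proof.
move=> hy i; case/andP: (hy i) => h0 h1; rewrite /proj.
by rewrite (min_r h1) (max_r h0).
Qed.

Definition inbox n (y x v : vec n) := forall i, `|y i - x i| <= v i.

Section Lip.
Variables (n : nat) (L : R) (f : vec n -> R).
Hypothesis Lpos : 0 < L.
Hypothesis Hf : forall x y : vec n, in_cube x -> in_cube y ->
       `|f x - f y| <= L * enorm (fun i => x i - y i).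

Lemma lip_proj (x y : vec n) :
  `|f (proj x) - f (proj y)| <= L * enorm (fun i => x i - y i).
Proof.
apply: (le_trans (Hf (proj_cube x) (proj_cube y))).
rewrite ler_pM2l //; apply: enorm_mono => i.
exact: clip_lip.
Qed.

Lemma lip_box (x v y : vec n) : in_cube y -> inbox y x v ->
  f (proj x) - L * enorm v <= f y.
Proof.
move=> hy hb.
have e1 : enorm (fun i => x i - y i) <= enorm v.
  apply: enorm_mono => i; rewrite distrC.
  apply: (le_trans (hb i)); exact: ler_norm.
have := lip_proj x y; rewrite (_ : f (proj y) = f y); last first.
  by congr f; apply: functional_extensionality_dep => i; rewrite proj_id.
move=> h; have h' := ler_norm (f (proj x) - f y).
have : L * enorm (fun i => x i - y i) <= L * enorm v by rewrite ler_pM2l.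
lra.
Qed.
End Lip.

Definition shape n (e : nat) (v : vec n) :=
  (forall i, 0 < v i) /\ (forall i j, v i <= 2 * v j) /\ (\prod_i v i) * 2 ^+ e <= 1.

Lemma shape_norm n (v : vec n) (I : 'I_n) :
  (forall i, 0 < v i) -> (forall j, v j <= v I) ->
  enorm v <= Num.sqrt (n%:R) * v I.
Proof.
move=> hp hm; rewrite /enorm -(ger0_norm (ltW (hp I))) -sqrtr_sqr -sqrtrM ?ler0n //.
rewrite ler_sqrt; last by rewrite mulr_ge0 ?ler0n ?sqr_ge0.
have -> : n%:R * v I ^+ 2 = \sum_(i < n) v I ^+ 2.
  by rewrite sumr_const card_ord mulr_natl.
apply: ler_sum => i _.
by apply: lerXn2r; rewrite ?nnegrE ?(ltW (hp _)).
Qed.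

Section Theta.
Variables (n : nat) (th : R).
Hypotheses (n0 : (0 < n)%N) (thn : th ^+ n = 2) (th0 : 0 < th).

Lemma th_ge1 : 1 <= th.
Proof.
rewrite -(expr_ge1 n0) ?(ltW th0) // thn; lra.
Qed.

Lemma shape_max e (v : vec n) (I : 'I_n) :
  shape e v -> (forall j, v j <= v I) -> v I * th ^+ e <= 2.
Proof.
case=> [hp [hr hprod]] hm.
rewrite -(ler_pXn2r n0) ?nnegrE ?mulr_ge0 ?exprn_ge0 ?(ltW th0) ?(ltW (hp I)) //.
rewrite exprMn -exprM mulnC exprM thn.
have : v I ^+ n <= 2 ^+ n * \prod_i v i.
  have -> : v I ^+ n = \prod_(i < n) v I by rewrite prodr_const card_ord.
  have -> : (2 : R) ^+ n = \prod_(i < n) 2 by rewrite prodr_const card_ord.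
  rewrite -big_split /=.
  by apply: ler_prod => i _; rewrite (ltW (hp I)) /= hr.
move=> h; apply: (le_trans (ler_wpM2r (exprn_ge0 e (ler0n R 2)) h)).
rewrite -mulrA -[X in _ <= X]mulr1 ler_wpM2l // exprn_ge0 //; lra.
Qed.
End Theta.

Definition Good n L (f : vec n -> R) (xstar : vec n) (th : R) (e : nat) (c : cand n) : Prop :=
  shape e c.1.2 /\ f (proj c.1.1) - c.2 <= 4 * L * Num.sqrt (n%:R) * th * th ^- e /\
  (inbox xstar c.1.1 c.1.2 -> c.2 <= f xstar).

Lemma zvec_ge0 n (v : vec n) I i : (forall i, 0 < v i) -> 0 <= zvec v I i.
Proof. move=> hp; rewrite /zvec; case: eqP => _ //; have := hp I; lra. Qed.

Lemma zvec_le n (v : vec n) I i : (forall i, 0 < v i) -> zvec v I i <= v i.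
Proof. move=> hp; rewrite /zvec; case: eqP => [->|_]; have := hp I; have := hp i; lra. Qed.

Lemma shape_child n e (v : vec n) I : split_index v I -> shape e v ->
  shape e.+1 (fun i => v i - zvec v I i).
Proof.
case=> hm _ [hp [hr hprod]]; split; [|split].
- move=> i; rewrite /zvec; case: eqP => [->|_]; have := hp I; have := hp i; lra.
- move=> i j; rewrite /zvec; case: eqP => [->|_]; case: eqP => [->|_];
  have := hp I; have := hp i; have := hp j; have := hm i; have := hm j;
  have := hr i j; have := hr I j; lra.
- suff -> : \prod_i (v i - zvec v I i) * 2 ^+ e.+1 = \prod_i v i * 2 ^+ e by [].
  rewrite (bigD1 I) //= [in RHS](bigD1 I) //=.
  rewrite (eq_bigr v) => [|i /negPf hi]; last by rewrite /zvec hi subr0.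
  by rewrite /zvec eqxx exprS; field.
Qed.

Section Child.
Variables (n : nat) (L : R) (f : vec n -> R) (th : R) (xstar : vec n).
Hypothesis Lpos : 0 < L.
Hypothesis Hf : forall x y : vec n, in_cube x -> in_cube y ->
       `|f x - f y| <= L * enorm (fun i => x i - y i).
Hypotheses (n0 : (0 < n)%N) (thn : th ^+ n = 2) (th0 : 0 < th).
Hypothesis hx : in_cube xstar.

Lemma child_good e (x xc v : vec n) I : split_index v I -> shape e v ->
  (forall i, `|xc i - x i| <= zvec v I i) ->
  Good L f xstar th e.+1 ((xc, fun i => v i - zvec v I i), f (proj x) - L * enorm v).
Proof.
move=> hs hsh hz; have [hm _] := hs; have [hp _] := hsh.
split; [|split] => /=.
- exact: shape_child.
- have h1 := ler_norm (f (proj xc) - f (proj x)).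
  have h2 := lip_proj Lpos Hf xc x.
  have h3 : enorm (fun i => xc i - x i) <= enorm v.
    apply: enorm_mono => i; apply: (le_trans (hz i)).
    by rewrite ger0_norm ?(ltW (hp i)) // zvec_le.
  have h4 := shape_norm hp hm.
  have h5 := shape_max n0 thn th0 hsh hm.
  have ha : 0 < th ^- e by rewrite invr_gt0 exprn_gt0.
  have hv : v I <= 2 * th ^- e.
    have := ler_wpM2r (ltW ha) h5; rewrite -mulrA mulfV ?mulr1 //.
    by rewrite expf_neq0 // gt_eqF.
  have -> : 4 * L * Num.sqrt n%:R * th * th ^- e.+1 = 4 * L * Num.sqrt n%:R * th ^- e.
    by rewrite exprS invfM -!mulrA [th * (_ * _)]mulrA mulfV ?mul1r // gt_eqF.
  have hS := sqrtr_ge0 (n%:R : R).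
  have h6 : L * enorm (fun i => xc i - x i) <= L * enorm v by rewrite ler_pM2l.
  have h7 : L * enorm v <= L * (Num.sqrt n%:R * (2 * th ^- e)).
    rewrite ler_pM2l //; apply: (le_trans h4); exact: ler_wpM2l.
  rewrite -!mulrA; rewrite !mulrA in h7; rewrite -!mulrA in h7.
  lra.
- move=> hb; apply: (lip_box Lpos Hf) => // i.
  have := hb i; have := hz i; have := ler_distD (xc i) (xstar i) (x i).
  lra.
Qed.

Lemma children_good e (x v : vec n) I : split_index v I -> shape e v ->
  forall c, List.In c (children L x v (f (proj x)) I) -> Good L f xstar th e.+1 c.
Proof.
move=> hs hsh c /= [<-|[<-|[]]]; apply: child_good => // i;
have [hp _] := hsh; have := zvec_ge0 I i hp.
- by rewrite addrAC subrr add0r => h; rewrite ger0_norm.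
- by rewrite addrAC subrr add0r normrN => h; rewrite ger0_norm.
Qed.

Lemma children_cover (x v : vec n) I fa : (forall i, 0 < v i) -> inbox xstar x v ->
  exists c, List.In c (children L x v fa I) /\ inbox xstar c.1.1 c.1.2.
Proof.
move=> hp hb; case: (leP (x I) (xstar I)) => h.
- exists (head ((x, v), 0) (children L x v fa I)); split; first by left.
  move=> i /=; have := hb i; rewrite /zvec; case: eqP => [->|_]; last by rewrite addr0 subr0.
  have := hp I; rewrite !ler_norml => ? /andP[? ?]; apply/andP; split; lra.
- exists (last ((x, v), 0) (children L x v fa I)); split; first by right; left.
  move=> i /=; have := hb i; rewrite /zvec; case: eqP => [->|_]; last by rewrite subr0 subr0.
  have := hp I; rewrite !ler_norml => ? /andP[? ?]; apply/andP; split; lra.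
Qed.
End Child.

Section Init.
Variables (n : nat) (th : R).
Hypotheses (n0 : (0 < n)%N) (thn : th ^+ n = 2) (th0 : 0 < th).

Lemma thinv_gt0 k : 0 < th ^- k.
Proof. by rewrite invr_gt0 exprn_gt0. Qed.

Lemma thinv_le1 k : th ^- k <= 1.
Proof.
rewrite invf_le1 ?exprn_gt0 //; apply: exprn_ege1; exact: th_ge1 n0 thn th0.
Qed.

Lemma thinv_half k : (k <= n)%N -> 1 <= 2 * th ^- k.
Proof.
move=> hk; have h : th ^+ k <= 2 by rewrite -thn; apply: ler_weXn2l => //; exact: th_ge1 n0 thn th0.
have hp := exprn_gt0 k th0.
rewrite -(ler_pM2r hp) mul1r -mulrA mulVf ?mulr1 ?gt_eqF //.
Qed.

Lemma shape_init : shape 0 (fun i : 'I_n => th ^- i.+1).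
Proof.
split; [|split].
- move=> i; exact: thinv_gt0.
- move=> i j; apply: (le_trans (thinv_le1 i.+1)); apply: thinv_half; exact: ltn_ord.
- rewrite expr0 mulr1; apply: prodr_ile1 => i _.
  by rewrite (ltW (thinv_gt0 _)) thinv_le1.
Qed.

Lemma inbox_init (y : vec n) : in_cube y -> inbox y (fun i : 'I_n => th ^- i.+1) (fun i : 'I_n => th ^- i.+1).
Proof.
move=> hy i; have /andP[h0 h1] := hy i; have := thinv_half (ltn_ord i).
rewrite ler_norml => h; apply/andP; split; lra.
Qed.
End Init.

Definition phi (th : R) (D e : nat) :=
  th ^- D * (2 ^+ (D.+1 - e) - th ^+ (D.+1 - e)) / (2 - th).

Section Pot.
Variables (th : R) (D : nat).
Hypotheses (th1 : 1 <= th) (th2 : 2 * th <= 3).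

Lemma phi_ge0 e : 0 <= phi th D e.
Proof.
have h1 : 1 <= th := th1; have h2 : 2 * th <= 3 := th2.
rewrite /phi; apply: divr_ge0; last lra.
apply: mulr_ge0; first by rewrite invr_ge0 exprn_ge0 //; lra.
rewrite subr_ge0; apply: lerXn2r; rewrite ?nnegrE; lra.
Qed.

Lemma phi_step e : th ^- e <= phi th D e - 2 * phi th D e.+1 + th ^- D.+1.
Proof.
have h1 : 1 <= th := th1; have h2 : 2 * th <= 3 := th2.
have th0 : 0 < th by lra.
have hD1 : 0 <= th ^- D.+1 by rewrite invr_ge0 exprn_ge0 //; lra.
case: (leqP e D) => h.
- rewrite /phi subSn // subSS.
  have hD : D = (e + (D - e))%N by rewrite subnKC.
  set k := (D - e)%N; rewrite [in th ^- D]hD exprD invfM.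
  have -> : th ^- e * th ^- k * (2 ^+ k.+1 - th ^+ k.+1) / (2 - th) -
    2 * (th ^- e * th ^- k * (2 ^+ k - th ^+ k) / (2 - th)) = th ^- e.
    rewrite !exprS; field; rewrite ?expf_neq0 ?gt_eqF //; lra.
  lra.
- rewrite /phi (_ : (D.+1 - e)%N = 0%N); last by apply/eqP; rewrite subn_eq0.
  rewrite (_ : (D.+1 - e.+1)%N = 0%N); last by apply/eqP; rewrite subn_eq0 ltnW.
  rewrite !expr0 subrr mulr0 mul0r mulr0 subr0 add0r.
  rewrite lef_pV2 ?posrE ?exprn_gt0 //; exact: ler_weXn2l.
Qed.

Lemma phi_1 : 2 * phi th D 1 <= 4 * (2 ^+ D * th ^- D).
Proof.
have h1 : 1 <= th := th1; have h2 : 2 * th <= 3 := th2.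
rewrite /phi subSS subn0.
set A := th ^- D * (2 ^+ D - th ^+ D).
have hi : 0 <= th ^- D by rewrite invr_ge0 exprn_ge0 //; lra.
have hA : 0 <= A.
  apply: mulr_ge0 => //; rewrite subr_ge0; apply: lerXn2r; rewrite ?nnegrE; lra.
have hAB : A <= 2 ^+ D * th ^- D.
  rewrite /A mulrC ler_wpM2r //; rewrite lerBlDr lerDl exprn_ge0 //; lra.
have h3 : 0 < 2 - th by lra.
have hq : A / (2 - th) <= 2 * A.
  have h4 : 0 <= 2 * (2 - th) - 1 by lra.
  have := mulr_ge0 hA h4; rewrite ler_pdivrMr // => h; lra.
lra.
Qed.
End Pot.

Section Lists.
Variables (A B : Type).

Lemma In_catl (x : A) a b : List.In x a -> List.In x (a ++ b).
Proof. elim: a => //= y a IH [->|h]; [by left | by right; apply: IH]. Qed.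

Lemma In_catr (x : A) a b : List.In x b -> List.In x (a ++ b).
Proof. elim: a => //= y a IH h; right; exact: IH. Qed.

Lemma In_cat_inv (x : A) a b : List.In x (a ++ b) -> List.In x a \/ List.In x b.
Proof.
elim: a => //= [h|y a IH [->|h]]; [by right | by left; left|].
by case: (IH h) => h'; [left; right|right].
Qed.

Lemma all_In (p : pred A) l x : all p l -> List.In x l -> p x.
Proof. elim: l => //= y l IH /andP[py pl] [<-|h] //; exact: IH. Qed.

Lemma F2_In (P : B -> A -> Prop) ds l c :
  List.Forall2 P ds l -> List.In c l -> exists e, P e c.
Proof.
move=> h; elim: h => //= e c' ds' l' pe _ IH [<-|h]; [by exists e | exact: IH].
Qed.

Lemma F2_cat (P : B -> A -> Prop) a b a' b' :
  List.Forall2 P a b -> List.Forall2 P a' b' -> List.Forall2 P (a ++ a') (b ++ b').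
Proof. move=> h; elim: h => //= e c ds l pe _ IH h'; constructor => //; exact: IH. Qed.

Lemma F2_split (P : B -> A -> Prop) ds l1 c l2 :
  List.Forall2 P ds (l1 ++ c :: l2) ->
  exists d1 e d2, ds = d1 ++ e :: d2 /\ List.Forall2 P d1 l1 /\ P e c /\ List.Forall2 P d2 l2.
Proof.
elim: l1 ds => [|y l1 IH] ds /= h.
- inversion h; subst; by exists [::], x, l.
- inversion h; subst. have [d1 [e [d2 [-> [h1 [h2 h3]]]]]] := IH _ H3.
  exists (x :: d1), e, d2; split => //; split => //; by constructor.
Qed.
End Lists.

Section Final.
Variables (m T D : nat) (th w : R).
Hypotheses (T1 : (1 <= T)%N) (hD1 : (2 ^ D <= T)%N) (hD2 : (T <= 2 ^ D.+1)%N).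
Hypotheses (thn : th ^+ m.+1 = 2) (th0 : 0 < th) (hw : w ^+ m.+1 * T%:R = 1) (w0 : 0 < w).

Lemma Tw_pow : (T%:R * w) ^+ m.+1 = T%:R ^+ m.
Proof. by rewrite exprMn exprSr -mulrA [T%:R * _]mulrC hw mulr1. Qed.

Lemma F1 : 1 <= T%:R * w.
Proof.
rewrite -(ler_pXn2r (ltn0Sn m)) ?nnegrE ?mulr_ge0 ?ler0n ?(ltW w0) // expr1n Tw_pow.
by apply: exprn_ege1; rewrite ler1n.
Qed.

Lemma F2 : 2 ^+ D * th ^- D <= T%:R * w.
Proof.
have hp : 0 < th ^- D by rewrite invr_gt0 exprn_gt0.
rewrite -(ler_pXn2r (ltn0Sn m)) ?nnegrE ?mulr_ge0 ?ler0n ?(ltW w0) ?(ltW hp) ?exprn_ge0 //.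
have E1 : (th ^- D) ^+ m.+1 = (2 ^+ D)^-1 by rewrite exprVn -exprM mulnC exprM thn.
rewrite Tw_pow exprMn E1.
rewrite exprSr -mulrA mulfV ?mulr1 ?expf_neq0 //.
apply: lerXn2r; rewrite ?nnegrE ?exprn_ge0 ?ler0n //.
all: by rewrite ?pnatr_eq0 // -natrX ler_nat.
Qed.

Lemma F3 : th ^- D.+1 <= w.
Proof.
have hp : 0 < th ^- D.+1 by rewrite invr_gt0 exprn_gt0.
rewrite -(ler_pXn2r (ltn0Sn m)) ?nnegrE ?(ltW w0) ?(ltW hp) //.
rewrite exprVn -exprM mulnC exprM thn.
have hT : 0 < (T%:R : R) by rewrite ltr0n.
have -> : w ^+ m.+1 = (T%:R)^-1.
  by apply: (mulIf (lt0r_neq0 hT)); rewrite hw mulVf // lt0r_neq0.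
rewrite lef_pV2 ?posrE ?exprn_gt0 //.
by rewrite -natrX ler_nat.
Qed.
End Final.

Theorem theorem1 :
  exists C : R, 0 < C /\
  forall (n : nat), (2 <= n)%N ->
  forall (L : R), 0 < L ->
  forall (f : vec n -> R),
    (forall x y : vec n, in_cube x -> in_cube y ->
       `|f x - f y| <= L * enorm (fun i => x i - y i)) ->
  forall (T : nat), (1 <= T)%N ->
  forall (xs vs : nat -> vec n) (Ls : nat -> seq (cand n)),
    is_run L f T xs vs Ls ->
  forall xstar : vec n, in_cube xstar ->
    (T%:R)^-1 * (\sum_(1 <= t < T.+1) f (proj (xs t))) - f xstar
      <= C * L * Num.sqrt (n%:R) * rpow (T%:R) (- (n%:R)^-1).
Proof.
exists 31; split; first lra.
move=> n n2 L Lpos f Hf T T1 xs vs Ls run xstar hx.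
have n0 : (0 < n)%N by apply: leq_trans n2.
set th := theta n.
have thn : th ^+ n = 2 := theta_pow n0.
have th0 : 0 < th := rpow_gt0 _ _.
have th1 : 1 <= th := th_ge1 n0 thn th0.
have th2 : 2 * th <= 3.
  have : th ^+ 2 <= th ^+ n by apply: ler_weXn2l.
  rewrite thn expr2 => h; nra.
set D := trunc_log 2 T.
have [hD1 hD2] : (2 ^ D <= T)%N /\ (T <= 2 ^ D.+1)%N.
  by have /andP[h1 h2] := trunc_log_bounds (isT : (1 < 2)%N) T1; split => //; apply: ltnW.
set S := Num.sqrt (n%:R).
have S0 : 0 <= S := sqrtr_ge0 _.
set K := 4 * L * S * th.
have K0 : 0 <= K by rewrite /K !mulr_ge0 //; lra.
pose Inv t := exists ds : seq nat, List.Forall2 (Good L f xstar th) ds (Ls t) /\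
  (exists c, List.In c (Ls t) /\ inbox xstar c.1.1 c.1.2) /\
  \sum_(1 <= s < t.+1) (f (proj (xs s)) - f xstar) + K * \sum_(e <- ds) phi th D e
    <= L * S + K * (2 * phi th D 1) + (t%:R - 1) * (K * th ^- D.+1).
case: run => hx1 [hv1 [[I1 [hs1 hL1]] hstep]].
have hgood := children_good Lpos Hf n0 thn th0 hx.
have inv : forall t, (1 <= t <= T)%N -> Inv t.
  elim=> [|t IH] // /andP[_ htT].
  case: (posnP t) => [-> | tpos].
  - have sh1 : shape 0 (vs 1%N) by rewrite hv1; exact: shape_init n0 thn th0.
    have hp1 : forall i, 0 < vs 1%N i by case: sh1.
    have hb1 : inbox xstar (xs 1%N) (vs 1%N) by rewrite hx1 hv1 /v_init; exact: (inbox_init n0 thn th0 hx).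
    exists [:: 1%N; 1%N]; rewrite hL1; split; [|split].
    + constructor; [|constructor; [|constructor]]; apply: (hgood 0%N _ _ _ hs1 sh1).
      * by left.
      * by right; left.
    + exact: children_cover.
    + rewrite big_nat1 !big_cons big_nil subrr mul0r addr0.
      have hb := lip_box Lpos Hf hx hb1.
      have [hm1 _] := hs1.
      have hn : enorm (vs 1%N) <= S * vs 1%N I1 := shape_norm hp1 hm1.
      have hI : vs 1%N I1 <= 1 by rewrite hv1; exact: thinv_le1 n0 thn th0 _.
      have h1 : S * vs 1%N I1 <= S by rewrite -[X in _ <= X]mulr1 ler_wpM2l.
      have h2 : L * enorm (vs 1%N) <= L * S.
        rewrite ler_pM2l //; lra.
      have E : K * (phi th D 1 + phi th D 1) = K * (2 * phi th D 1) by ring.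
      lra.
  - have ht1 : (1 <= t <= T)%N by rewrite tpos ltnW.
    have [ds [hF [[c' [hc'in hc'box]] hsum]]] := IH ht1.
    have ht2 : (2 <= t.+1 <= T)%N by rewrite ltnS tpos htT.
    have [l1 [l2 [s [I [hLt [hall [hsI hLt1]]]]]]] := hstep t.+1 ht2.
    rewrite /= in hLt; rewrite hLt in hF hc'in.
    have [d1 [e [d2 [hds [hF1 [hGe hF2]]]]]] := F2_split hF.
    have [shE [hbE _]] := hGe.
    rewrite /= in shE hbE.
    have hsel : s <= f xstar.
      have [e' [_ [_ hc'2]]] := F2_In hF hc'in.
      have := hc'2 hc'box.
      case: (In_cat_inv hc'in) => [hin | [<- // | hin]] h.
      + have := all_In hall (In_catl l2 hin); rewrite /=; lra.
      + have := all_In hall (In_catr l1 hin); rewrite /=; lra.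
    exists (d1 ++ d2 ++ [:: e.+1; e.+1]); rewrite hLt1; split; [|split].
    + apply: F2_cat => //; apply: F2_cat => //.
      constructor; [|constructor; [|constructor]]; apply: (hgood e _ _ _ hsI shE).
      * by left.
      * by right; left.
    + case: (In_cat_inv hc'in) => [hin | [hc | hin]].
      * by exists c'; split => //; apply: In_catl.
      * rewrite -hc /= in hc'box.
        have [hpE _] := shE.
        have [c2 [hc2 hb2]] := children_cover L I (f (proj (xs t.+1))) hpE hc'box.
        by exists c2; split => //; apply: In_catr; apply: In_catr.
      * by exists c'; split => //; apply: In_catr; apply: In_catl.
    + rewrite hds !big_cat !big_cons /= in hsum.
      rewrite (big_nat_recr t.+1) // !big_cat !big_cons /= big_nil.
      have hb : f (proj (xs t.+1)) - s <= K * th ^- e := hbE.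
      have hp := ler_wpM2l K0 (phi_step D th1 th2 e).
      have E : K * (phi th D e - 2 * phi th D e.+1 + th ^- D.+1) =
        K * phi th D e - 2 * (K * phi th D e.+1) + K * th ^- D.+1 by ring.
      rewrite E in hp.
      have E2 : ((t.+1)%:R - 1) * (K * th ^- D.+1) = (t%:R - 1) * (K * th ^- D.+1) + K * th ^- D.+1.
        by rewrite -addn1 natrD; ring.
      rewrite E2 !mulrDr.
      rewrite !mulrDr in hsum.
      lra.
have hTT : (1 <= T <= T)%N by rewrite T1 leqnn.
have [ds [_ [_ hsum]]] := inv T hTT.
have hds : 0 <= \sum_(e <- ds) phi th D e by apply: sumr_ge0 => e _; exact: phi_ge0.
set w := rpow (T%:R) (- (n%:R)^-1).
have w0 : 0 < w := rpow_gt0 _ _.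
have hw : w ^+ n.-1.+1 * T%:R = 1 by rewrite prednK //; exact: omega_pow.
have thn' : th ^+ n.-1.+1 = 2 by rewrite prednK.
have f1 := F1 T1 hw w0.
have f2 := F2 hD1 thn' th0 hw w0.
have f3 := F3 T1 hD2 thn' th0 hw w0.
have p1 := phi_1 D th1 th2.
set W := T%:R * w in f1 f2.
set P := L * S in hsum *.
have P0 : 0 <= P by rewrite mulr_ge0 //; lra.
have hT : 0 < (T%:R : R) by rewrite ltr0n.
have hKP : K <= 6 * P.
  have -> : K = 4 * (P * th) by rewrite /K /P; ring.
  have h3 : 0 <= 3 - 2 * th by lra.
  have := mulr_ge0 P0 h3; nra.
have e1 : K * (2 * phi th D 1) <= 4 * (K * W).
  have h : 2 * phi th D 1 <= 4 * W by lra.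
  have := ler_wpM2l K0 h; rewrite mulrCA; lra.
have e2 : (T%:R - 1) * (K * th ^- D.+1) <= K * W.
  have hth : 0 <= th ^- D.+1 by rewrite invr_ge0 exprn_ge0 //; lra.
  have h : K * th ^- D.+1 <= K * w by apply: ler_wpM2l.
  have h' := mulr_ge0 K0 hth.
  have -> : K * W = T%:R * (K * w) by rewrite /W; ring.
  nra.
have e3 : P <= P * W.
  have h : 0 <= W - 1 by lra.
  have := mulr_ge0 P0 h; nra.
have e4 : K * W <= 6 * (P * W) by rewrite mulrA; apply: ler_wpM2r => //; lra.
have hKs : 0 <= K * \sum_(e <- ds) phi th D e by apply: mulr_ge0.
have key : \sum_(1 <= s < T.+1) (f (proj (xs s)) - f xstar) <= 31 * (P * W) by lra.
rewrite big_split /= sumrN sumr_const_nat subn1 /= in key.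
rewrite -(ler_pM2l hT) mulrBr mulrA mulfV ?lt0r_neq0 // mul1r.
rewrite /W in key.
have -> : T%:R * (31 * L * S * w) = 31 * P * (T%:R * w) by rewrite /P; ring.
rewrite -[f xstar *+ T]mulr_natl in key; by rewrite -mulrA.
Qed.
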